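(* Let $\alpha\in(0,1)$ be irrational, let $\mathcal{L}_\alpha$ be the Sturmian language generated by $\alpha$, and let $q_n=[(n+1)\alpha]$ for $n\ge0$. Let ${\rm S}:\mathcal{L}_\alpha\to\mathbb{N}$ be a homomorphism, and write ${\rm S}_0={\rm S}(0)$, ${\rm S}_1={\rm S}(1)$. Then $${\rm S}(\mathcal{L}_\alpha)=\{({\rm S}_1-{\rm S}_0)q_n+n{\rm S}_0+{\rm S}_0:\ n\ge0\}\ \cup\ \{({\rm S}_1-{\rm S}_0)q_n+n{\rm S}_0+{\rm S}_1:\ n\ge0\}.$$
   Context: $\mathbb{N}=\{1,2,3,\dots\}$ and $[x]$ denotes the integer part (floor) of $x$. For irrational $\alpha\in(0,1)$, the characteristic word $c_\alpha=(c_\alpha(n))_{n\ge0}$ is the infinite word over $\{0,1\}$ with $c_\alpha(n)=[(n+2)\alpha]-[(n+1)\alpha]$. The Sturmian language $\mathcal{L}_\alpha$ is the set of all nonempty finite words occurring as factors (subwords) of $c_\alpha$ (equivalently, of $0c_\alpha$ or of $1c_\alpha$). A homomorphism ${\rm S}:\mathcal{L}_\alpha\to\mathbb{N}$ is a map with ${\rm S}(w_1\cdots w_n)={\rm S}(w_1)+\cdots+{\rm S}(w_n)$, determined by ${\rm S}(0),{\rm S}(1)\in\mathbb{N}$. *)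

(* Defs.v *)
From Stdlib Require Import Reals ZArith List.
Import ListNotations.
Open Scope R_scope.

Definition floorR (x : R) : Z := Int_part x.

Definition irrational (x : R) : Prop :=
  forall (p q : Z), q <> 0%Z -> x <> IZR p / IZR q.

Definition charword (alpha : R) (n : nat) : Z :=
  (floorR (INR (n + 2) * alpha) - floorR (INR (n + 1) * alpha))%Z.

Definition sturmian_factor (alpha : R) (w : list Z) : Prop :=
  w <> [] /\
  exists i : nat, w = map (fun k => charword alpha (i + k)) (seq 0 (length w)).

Definition hom (S0 S1 : nat) (w : list Z) : nat :=
  fold_right (fun a acc => ((if Z.eqb a 0 then S0 else S1) + acc)%nat) 0%nat w.

Definition qseq (alpha : R) (n : nat) : Z := floorR (INR (n + 1) * alpha).

(* Main.v *)
Require Import Defs.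
From Stdlib Require Import Reals ZArith List.
From Stdlib Require Import Lra Lia Classical.
Import ListNotations.
Open Scope R_scope.

Lemma floor_char : forall x z, IZR z <= x < IZR z + 1 -> floorR x = z.
Proof.
  intros x z [H1 H2]. unfold floorR. destruct (base_Int_part x) as [B1 B2].
  assert (A1 : IZR (Int_part x) < IZR (z + 1)) by (rewrite plus_IZR; lra).
  assert (A2 : IZR z < IZR (Int_part x + 1)) by (rewrite plus_IZR; lra).
  apply lt_IZR in A1. apply lt_IZR in A2. lia.
Qed.

Lemma floor_bounds : forall x, IZR (floorR x) <= x < IZR (floorR x) + 1.
Proof. intros x. unfold floorR. destruct (base_Int_part x). lra. Qed.

Lemma floor_add : forall x y,
  floorR (x+y) = (floorR x + floorR y)%Z \/ floorR (x+y) = (floorR x + floorR y + 1)%Z.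
Proof.
  intros x y. pose proof (floor_bounds x). pose proof (floor_bounds y).
  destruct (Rlt_dec (x+y) (IZR (floorR x + floorR y) + 1)).
  - left. apply floor_char. rewrite plus_IZR in *. lra.
  - right. apply floor_char. rewrite !plus_IZR in *. lra.
Qed.

Lemma q0 : forall alpha, 0 < alpha < 1 -> qseq alpha 0 = 0%Z.
Proof.
  intros. unfold qseq. apply floor_char. simpl. lra.
Qed.

Lemma charword_q : forall alpha n,
  charword alpha n = (qseq alpha (n+1) - qseq alpha n)%Z.
Proof.
  intros. unfold charword, qseq. replace (n+2)%nat with (n+1+1)%nat by lia. reflexivity.
Qed.

Lemma q_diff : forall alpha i L,
  (qseq alpha (i+L) - qseq alpha i = floorR (INR L * alpha))%Z \/
  (qseq alpha (i+L) - qseq alpha i = floorR (INR L * alpha) + 1)%Z.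
Proof.
  intros. unfold qseq.
  replace (INR (i + L + 1) * alpha) with (INR (i+1) * alpha + INR L * alpha)
    by (rewrite !plus_INR; ring).
  destruct (floor_add (INR (i+1) * alpha) (INR L * alpha)); lia.
Qed.

Lemma char01 : forall alpha n, 0 < alpha < 1 ->
  charword alpha n = 0%Z \/ charword alpha n = 1%Z.
Proof.
  intros. rewrite charword_q. destruct (q_diff alpha n 1) as [H1|H1];
  replace (floorR (INR 1 * alpha)) with 0%Z in H1
    by (symmetry; apply floor_char; simpl; lra); lia.
Qed.

Lemma hom_cons : forall S0 S1 a w,
  hom S0 S1 (a::w) = ((if Z.eqb a 0 then S0 else S1) + hom S0 S1 w)%nat.
Proof. reflexivity. Qed.

Lemma hom_map : forall alpha S0 S1 i L s, 0 < alpha < 1 ->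
  Z.of_nat (hom S0 S1 (map (fun k => charword alpha (i+k)) (seq s L))) =
  ((Z.of_nat S1 - Z.of_nat S0) * (qseq alpha (i+s+L) - qseq alpha (i+s))
    + Z.of_nat L * Z.of_nat S0)%Z.
Proof.
  intros alpha S0 S1 i L. induction L as [|L IH]; intros s Ha.
  - simpl. replace (i+s+0)%nat with (i+s)%nat by lia. ring.
  - rewrite Nat2Z.inj_succ. cbn [map seq]. rewrite hom_cons.
    rewrite Nat2Z.inj_add, IH by exact Ha.
    replace (i + S s + L)%nat with (i+s+S L)%nat by lia.
    pose proof (charword_q alpha (i+s)) as Hc.
    replace (i + s + 1)%nat with (i + S s)%nat in Hc by lia.
    destruct (char01 alpha (i+s) Ha) as [H|H]; rewrite H in *;
    cbn [Z.eqb]; lia.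
Qed.

Lemma nonconst : forall alpha L c, 0 < alpha < 1 -> irrational alpha -> (1 <= L)%nat ->
  ~ (forall i, (qseq alpha (i+L) - qseq alpha i)%Z = c).
Proof.
  intros alpha L c Ha Hirr HL Hall.
  assert (Hj : forall j, qseq alpha (j*L) = (Z.of_nat j * c)%Z).
  { induction j. simpl. apply q0; auto.
    replace (S j * L)%nat with (j*L + L)%nat by lia.
    specialize (Hall (j*L)%nat). rewrite Nat2Z.inj_succ. lia. }
  assert (Hb : forall j, -1 < INR j * (INR L * alpha - IZR c) < 1).
  { intros j. specialize (Hj j). unfold qseq in Hj.
    pose proof (floor_bounds (INR (j * L + 1) * alpha)) as B. rewrite Hj in B.
    rewrite mult_IZR, <- INR_IZR_INZ, plus_INR, mult_INR in B. simpl in B. nra. }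
  destruct (Req_dec (INR L * alpha - IZR c) 0) as [E|E].
  - apply (Hirr c (Z.of_nat L)). lia.
    rewrite <- INR_IZR_INZ. assert (0 < INR L) by (apply lt_0_INR; lia).
    field_simplify_eq; lra.
  - destruct (INR_archimed (Rabs (INR L * alpha - IZR c)) 1) as [j Hj'].
    apply Rabs_pos_lt; auto.
    specialize (Hb j). pose proof (pos_INR j).
    destruct (Rcase_abs (INR L * alpha - IZR c)) as [Hlt|Hge];
    [rewrite Rabs_left in Hj' by exact Hlt | rewrite Rabs_right in Hj' by exact Hge]; nra.
Qed.

Lemma achieve : forall alpha L, 0 < alpha < 1 -> irrational alpha -> (1 <= L)%nat ->
  forall t, (t = 0 \/ t = 1)%Z ->
  exists i, (qseq alpha (i+L) - qseq alpha i = floorR (INR L * alpha) + t)%Z.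
Proof.
  intros alpha L Ha Hirr HL t Ht.
  apply NNPP. intro N.
  apply (nonconst alpha L (floorR (INR L * alpha) + (1 - t)) Ha Hirr HL).
  intro i. destruct (q_diff alpha i L) as [H|H].
  - destruct Ht; subst. exfalso; apply N; exists i; lia. lia.
  - destruct Ht; subst. lia. exfalso; apply N; exists i; lia.
Qed.

Theorem theorem3 (alpha : R) (S0 S1 : nat)
  (Halpha : 0 < alpha < 1) (Hirr : irrational alpha)
  (HS0 : (1 <= S0)%nat) (HS1 : (1 <= S1)%nat) :
  forall m : Z,
    (exists w : list Z, sturmian_factor alpha w /\ Z.of_nat (hom S0 S1 w) = m) <->
    (exists n : nat,
        m = ((Z.of_nat S1 - Z.of_nat S0) * qseq alpha n + Z.of_nat n * Z.of_nat S0
             + Z.of_nat S0)%Z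
     \/ m = ((Z.of_nat S1 - Z.of_nat S0) * qseq alpha n + Z.of_nat n * Z.of_nat S0
             + Z.of_nat S1)%Z).
Proof.
  intros m. split.
  - intros [w [[Hne [i Hw]] Hm]].
    remember (length w) as L.
    destruct L as [|n]. { destruct w; simpl in *; congruence. }
    rewrite Hw, hom_map in Hm by exact Halpha.
    replace (i+0)%nat with i in Hm by lia.
    exists n.
    assert (Hq : qseq alpha n = floorR (INR (S n) * alpha)).
    { unfold qseq. replace (n+1)%nat with (S n) by lia. reflexivity. }
    destruct (q_diff alpha i (S n)) as [H|H]; rewrite <- Hq in H; rewrite H in Hm;
      rewrite Nat2Z.inj_succ in Hm; [left|right]; nia.
  - intros [n Hn].
    assert (Hq : qseq alpha n = floorR (INR (S n) * alpha)).
    { unfold qseq. replace (n+1)%nat with (S n) by lia. reflexivity. }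
    assert (HL : (1 <= S n)%nat) by lia.
    destruct Hn as [Hn|Hn];
    [destruct (achieve alpha (S n) Halpha Hirr HL 0%Z (or_introl eq_refl)) as [i Hi]
    |destruct (achieve alpha (S n) Halpha Hirr HL 1%Z (or_intror eq_refl)) as [i Hi]];
    exists (map (fun k => charword alpha (i+k)) (seq 0 (S n)));
    (split; [split; [simpl; congruence | exists i; rewrite length_map, length_seq; reflexivity]|]);
    rewrite hom_map by exact Halpha; replace (i+0)%nat with i by lia;
    rewrite <- Hq in Hi; rewrite Hi, Hn, Nat2Z.inj_succ; ring.
Qed.
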